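(* For all integers $s\ge1$ and $k\ge2$, the polynomial $F_{s,k}(x)$ is divisible (in $\mathbb{Q}[x]$) by $\prod_{p=k}^{s}(x-p)$, where the empty product (when $k>s$) equals $1$.
   Context: For an integer $j\ge0$, $\binom{x}{j}=x(x-1)\cdots(x-j+1)/j!$ as a polynomial in $x$, and $\binom{x}{j}=0$ for $j<0$. For integers $s\ge1$, $k\ge1$, the Moser polynomial is $F_{s,k}(x)=\sum_{p=1}^{s}(-1)^{p-1}p^{k-1}\binom{x}{s-p}$. *)

(* Defs.v *)
From HB Require Import structures.
From mathcomp Require Import all_boot all_order all_algebra.
Set Implicit Arguments. Unset Strict Implicit. Unset Printing Implicit Defensive.
Import GRing.Theory Num.Theory.
Local Open Scope ring_scope.

Definition binom_poly (j : nat) : {poly rat} :=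
  (j`!%:R)^-1 *: \prod_(i < j) ('X - (i%:R)%:P).

Definition binom_polyz (j : int) : {poly rat} :=
  match j with
  | Posz n => binom_poly n
  | Negz _ => 0
  end.

Definition moser_poly (s k : nat) : {poly rat} :=
  \sum_(1 <= p < s.+1)
     ((-1) ^+ (p - 1)%N * (p%:R) ^+ (k - 1)%N) *:
       binom_polyz (s%:Z - p%:Z).

(* Main.v *)
Require Import Defs.
From HB Require Import structures.
From mathcomp Require Import all_boot all_order all_algebra.
From mathcomp Require Import ring lra zify.
Import GRing.Theory Num.Theory.
Local Open Scope ring_scope.

Lemma prod_eval_ffact (n m : nat) :
  \prod_(i < n) ((m%:R : rat) - i%:R) = (m ^_ n)%:R.
Proof.
elim: n => [|n IH]; first by rewrite big_ord0 ffactn0.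
rewrite big_ord_recr /= IH ffactnSr.
case: (leqP n m) => hnm; first by rewrite natrM natrB.
by rewrite ffact_small // mul0r mul0n.
Qed.

Lemma binom_poly_eval (n m : nat) : (binom_poly n).[m%:R] = ('C(m, n))%:R.
Proof.
rewrite /binom_poly hornerZ horner_prod.
under eq_bigr do rewrite hornerXsubC.
rewrite prod_eval_ffact -bin_ffact natrM.
have h : (n`!%:R : rat) != 0 by rewrite pnatr_eq0 -lt0n fact_gt0.
by rewrite mulrC -mulrA mulfV // mulr1.
Qed.

Definition g (m : nat) (f : nat -> rat) :=
  \sum_(j < m.+1) (-1) ^+ j * ('C(m, j))%:R * f j.

Lemma gS m f : g m.+1 f = g m f - g m (fun j => f j.+1).
Proof.
rewrite /g big_ord_recl [in X in _ = X - _]big_ord_recl /= !bin0 !expr0 !mul1r.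
rewrite -addrA; congr (_ + _).
under eq_bigr => i _ do rewrite /bump /= binS natrD exprS !mulN1r mulrDr mulrDl mulNr mulNr.
rewrite big_split /= big_ord_recr /= bin_small // mulr0 mul0r oppr0 addr0.
congr (_ + _).
  by apply: eq_bigr => i _; rewrite /bump /= exprS mulN1r !mulNr add1n.
by rewrite -sumrN; apply: eq_bigr => i _; rewrite add1n !mulNr.
Qed.

Lemma size_diff (q : {poly rat}) m :
  (size q <= m.+1)%N -> (size (q - (q \Po ('X + 1)))%R <= m)%N.
Proof.
have s2 : size ('X + 1 : {poly rat}) = 2%N by rewrite -polyC1 size_XaddC.
have sc : size (q \Po ('X + 1)) = size q by rewrite size_comp_poly2.
move=> hq; apply/leq_sizeP => j hj; rewrite coefB.
case: (ltnP m (size q)) => h.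
  have hs : size q = m.+1 by apply/eqP; rewrite eqn_leq hq h.
  move: hj; rewrite leq_eqVlt => /orP [/eqP <-|hj].
    have hl : lead_coef (q \Po ('X + 1)) = lead_coef q.
      by rewrite lead_coef_comp ?s2 // -polyC1 lead_coefXaddC expr1n mulr1.
    move: hl; rewrite !lead_coefE sc hs /= => ->; exact: subrr.
  by rewrite !nth_default ?subrr // ?sc hs.
by rewrite !nth_default ?subrr // ?sc (leq_trans h).
Qed.

Lemma g_poly m (q : {poly rat}) :
  (size q <= m)%N -> g m (fun j => q.[j%:R]) = 0.
Proof.
elim: m q => [|m IH] q hq.
  move: hq; rewrite size_poly_leq0 => /eqP ->.
  by rewrite /g big_ord1 horner0 mulr0.
rewrite gS -(IH (q - (q \Po ('X + 1))) (size_diff _ _ hq)) /g -sumrB.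
apply: eq_bigr => i _.
by rewrite /= hornerD hornerN horner_comp !hornerE -natr1 mulrBr.
Qed.

Lemma sign_split (a i : nat) :
  ((-1) ^+ a : rat) = (-1) ^+ (a + i) * (-1) ^+ i.
Proof.
by rewrite exprD -mulrA -exprD addnn -mul2n exprM expr2 mulN1r opprK expr1n mulr1.
Qed.

Lemma moser_root (s k m : nat) : (2 <= k)%N -> (k <= m)%N -> (m <= s)%N ->
  (moser_poly s k).[m%:R] = 0.
Proof.
move=> hk hkm hms.
set q : {poly rat} := ((s%:R)%:P - 'X) ^+ (k - 1).
have hsq : (size q <= m)%N.
  apply: leq_trans (size_poly_exp_leq _ _) _.
  rewrite -opprB size_polyN size_XsubC /= mul1n.
  by rewrite ltn_subLR // ?(ltnW hk) // add1n.
have hk1 : (k - 1 != 0)%N by rewrite subn_eq0 -ltnNge.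
rewrite /moser_poly horner_sum.
rewrite (eq_big_nat _ _ (F2 := fun p => (-1) ^+ (p - 1) * (p%:R) ^+ (k - 1) * ('C(m, s - p))%:R)); last first.
  move=> p /andP [hp1 hps].
  by rewrite hornerZ subzn // /binom_polyz binom_poly_eval.
pose F := fun p : nat => ((-1) ^+ (p - 1) * (p%:R) ^+ (k - 1) * ('C(m, s - p))%:R : rat).
rewrite -/(\sum_(1 <= i < s.+1) F i).
have -> : \sum_(1 <= i < s.+1) F i = \sum_(0 <= i < s.+1) F i.
  by rewrite (@big_ltn _ _ _ 0) // /F expr0n (negPf hk1) mulr0 mul0r add0r.
rewrite big_nat_rev /=.
rewrite (eq_big_nat _ _ (F2 := fun i => (-1) ^+ (s - 1) * ((-1) ^+ i * ('C(m, i))%:R * q.[i%:R]))); last first.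
  move=> i /andP [_ his].
  rewrite /F add0n subSS subKn // /q horner_exp hornerD hornerN hornerC hornerX -natrB //.
  move: his; rewrite ltnS leq_eqVlt => /orP [/eqP ->|his].
    by rewrite subnn !expr0n (negPf hk1) !mulr0 mul0r.
  have -> : (s - 1 = (s - i - 1) + i)%N by lia.
  rewrite (sign_split (s - i - 1) i).
  ring.
rewrite -mulr_sumr (@big_cat_nat _ _ _ m.+1) //= ?ltnS //.
rewrite [X in _ + X]big1_seq ?addr0; last first.
  move=> i /andP [_]; rewrite mem_index_iota => /andP [hi _].
  by rewrite bin_small // mulr0 mul0r.
have -> : \sum_(0 <= i < m.+1) (-1) ^+ i * ('C(m, i))%:R * q.[i%:R] = g m (fun j => q.[j%:R]).
  by rewrite /g big_mkord.
by rewrite g_poly // mulr0.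
Qed.

Theorem mainTheorem18 (s k : nat) (hs : (1 <= s)%N) (hk : (2 <= k)%N) :
  (\prod_(k <= p < s.+1) ('X - (p%:R)%:P)) %| moser_poly s k.
Proof.
set rs := [seq (i%:R : rat) | i <- index_iota k s.+1].
have ha : all (root (moser_poly s k)) rs.
  apply/allP => x /mapP [i hi ->]; move: hi; rewrite mem_index_iota => /andP [h1 h2].
  by apply/rootP; apply: moser_root.
have hu : uniq_roots rs.
  rewrite uniq_rootsE map_inj_uniq ?iota_uniq //.
  by move=> a b /eqP; rewrite eqr_nat => /eqP.
have [r hr] := uniq_roots_prod_XsubC ha hu.
rewrite hr big_map; apply: dvdp_mull; exact: dvdpp.
Qed.
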